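(* Let $\gamma_{ab}(q)$ be a metric on an $n$-dimensional manifold and $E_0$ a fixed constant, and consider the geodesic equations $\ddot q^a+\Gamma^a_{bc}\dot q^b\dot q^c=0$ subject to the constraint $\gamma_{ab}\dot q^a\dot q^b=2E_0$. Then each of the following is a first integral of this constrained system: Integral 1. For $\ell\ge0$, $$I_{(\ell)1}=\Big(-\sum_{k=1}^{\ell}\frac{t^{2k}}{2k}L_{(2k-1)(a;b)}+C_{(0)ab}\Big)\dot q^a\dot q^b+\sum_{k=1}^{\ell}t^{2k-1}L_{(2k-1)a}\dot q^a+G(q),$$ where $C_{(0)ab}$ is a second order CKT with associated vector $X_{(0)a}$, each $L_{(2k-1)(a;b)}$ ($k=1,\dots,\ell$) is a second order CKT with associated vector $Y_{(2k-1)a}$, and $$E_0Y_{(2\ell-1)a}=0,\qquad E_0Y_{(2k-1)a}=k(2k+1)L_{(2k+1)a}\ (k=1,\dots,\ell-1),\qquad G_{,a}=-2E_0X_{(0)a}-L_{(1)a},$$ where $L_{(1)a}$ is present only if $\ell>0$. Integral 2. For $\ell\ge0$, $$I_{(\ell)2}=\sum_{k=0}^{\ell}\Big(-\frac{t^{2k+1}}{2k+1}L_{(2k)(a;b)}\dot q^a\dot q^b+t^{2k}L_{(2k)a}\dot q^a\Big),$$ where each $L_{(2k)(a;b)}$ ($k=0,\dots,\ell$) is a second order CKT with associated vector $Y_{(2k)a}$ and $$E_0Y_{(2\ell)a}=0,\qquad E_0Y_{(2k)a}=(k+1)(2k+1)L_{(2k+2)a}\ (k=0,\dots,\ell-1).$$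 Integral 3. For a constant $\lambda\ne0$, $$I_{(e)}=e^{\lambda t}\big(-L_{(a;b)}\dot q^a\dot q^b+\lambda L_a\dot q^a\big),$$ where $L_{(a;b)}$ is a second order CKT with associated vector $Y_a$ and $L_a=\frac{2E_0}{\lambda^2}Y_a$.
   Context: $\Gamma^a_{bc}$ are the Levi-Civita connection coefficients of $\gamma_{ab}$; comma = partial derivative, semicolon = covariant derivative, dot = $d/dt$; round brackets denote symmetrization with weight $1/N!$. A first integral of the constrained system is a function $I(t,q,\dot q)$ with $dI/dt=0$ along every geodesic solution satisfying $\gamma_{ab}\dot q^a\dot q^b=2E_0$. A symmetric tensor $U_{ab}$ is a second order conformal Killing tensor (CKT) with associated vector $u_a$ if $U_{(ab;c)}=u_{(a}\gamma_{bc)}$; if $u_a=0$ it is a Killing tensor (KT). *)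

(* Defs.v *)
(* Local-coordinate (chart) formalization of
   tensor calculus on an n-dimensional (pseudo-)Riemannian manifold. *)
From HB Require Import structures.
From mathcomp Require Import all_boot all_order all_algebra.
From mathcomp Require Import all_classical all_reals all_analysis.
Set Implicit Arguments. Unset Strict Implicit. Unset Printing Implicit Defensive.
Import Order.TTheory GRing.Theory Num.Theory.
Import numFieldNormedType.Exports.
Local Open Scope classical_set_scope.
Local Open Scope ring_scope.

Section Tensors.
Variables (R : realType) (n : nat).
Notation pt := 'rV[R]_n.

Definition sfield := pt -> R.
Definition covfield := 'I_n -> pt -> R.
Definition tens2 := 'I_n -> 'I_n -> pt -> R.

Definition evec (i : 'I_n) : pt := delta_mx 0 i.
Definition pd (i : 'I_n) (f : sfield) : sfield := fun x => derive f x (evec i).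

Definition iter_pd (s : seq 'I_n) (f : sfield) : sfield := foldr pd f s.
Definition smooth_on (D : set pt) (f : sfield) : Prop :=
  forall (s : seq 'I_n) (x : pt), D x -> differentiable (iter_pd s f) x.

Definition gmx (g : tens2) (x : pt) : 'M[R]_n := \matrix_(a, b) g a b x.
Definition is_metric (D : set pt) (g : tens2) : Prop :=
  (forall a b x, D x -> g a b x = g b a x) /\
  (forall x, D x -> gmx g x \in unitmx) /\
  (forall a b, smooth_on D (g a b)).

Definition ginv (g : tens2) (a b : 'I_n) (x : pt) : R := invmx (gmx g x) a b.
Definition Gam (g : tens2) (a b c : 'I_n) (x : pt) : R :=
  2^-1 * \sum_(d < n) ginv g a d x *
     (pd c (g d b) x + pd b (g d c) x - pd d (g b c) x).

Definition cov1 (g : tens2) (L : covfield) (a b : 'I_n) (x : pt) : R :=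
  pd b (L a) x - \sum_(d < n) Gam g d a b x * L d x.
Definition cov2 (g : tens2) (U : tens2) (a b c : 'I_n) (x : pt) : R :=
  pd c (U a b) x - \sum_(d < n) (Gam g d a c x * U d b x + Gam g d b c x * U a d x).

Definition sym2 (T : tens2) : tens2 := fun a b x => 2^-1 * (T a b x + T b a x).
Definition sym3 (T : 'I_n -> 'I_n -> 'I_n -> pt -> R) a b c x : R :=
  6^-1 * (T a b c x + T a c b x + T b a c x + T b c a x + T c a b x + T c b a x).

Definition symcov1 (g : tens2) (L : covfield) : tens2 := sym2 (cov1 g L).

Definition is_CKT (D : set pt) (g : tens2) (U : tens2) (u : covfield) : Prop :=
  (forall a b x, D x -> U a b x = U b a x) /\
  (forall a b c x, D x ->
     sym3 (cov2 g U) a b c x = sym3 (fun a b c y => u a y * g b c y) a b c x).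

Definition quad (T : tens2) (x v : pt) : R :=
  \sum_(a < n) \sum_(b < n) T a b x * v 0 a * v 0 b.
Definition lin (L : covfield) (x v : pt) : R := \sum_(a < n) L a x * v 0 a.

Definition constrained_geodesic (D : set pt) (g : tens2) (E0 : R)
    (T : set R) (q : R -> pt) : Prop :=
  forall t, T t ->
    [/\ D (q t), derivable q t 1, derivable (derive1 q) t 1,
        (forall a, derive1 (derive1 q) t 0 a +
           \sum_(b < n) \sum_(c < n) Gam g a b c (q t) * derive1 q t 0 b * derive1 q t 0 c = 0)
      & quad g (q t) (derive1 q t) = 2 * E0].

Definition first_integral (D : set pt) (g : tens2) (E0 : R)
    (I : R -> pt -> pt -> R) : Prop :=
  forall (T : set R) (q : R -> pt), open T -> constrained_geodesic D g E0 T q ->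
    forall t, T t -> is_derive t 1 (fun s => I s (q s) (derive1 q s)) 0.

(* The three families of candidate first integrals.  L m stands for L_{(m)}. *)
Definition I1 (g : tens2) (ell : nat) (C0 : tens2) (L : nat -> covfield)
    (G : sfield) (t : R) (x v : pt) : R :=
  quad (fun a b y =>
          - (\sum_(1 <= k < ell.+1)
               t ^+ (2 * k) / (2 * k)%:R * symcov1 g (L (2 * k - 1)%N) a b y)
          + C0 a b y) x v
  + \sum_(1 <= k < ell.+1) t ^+ (2 * k - 1) * lin (L (2 * k - 1)%N) x v
  + G x.

Definition I2 (g : tens2) (ell : nat) (L : nat -> covfield)
    (t : R) (x v : pt) : R :=
  \sum_(0 <= k < ell.+1)
     (- (t ^+ (2 * k + 1) / (2 * k + 1)%:R) * quad (symcov1 g (L (2 * k)%N)) x v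
      + t ^+ (2 * k) * lin (L (2 * k)%N) x v).

Definition Iexp (g : tens2) (lam : R) (L : covfield) (t : R) (x v : pt) : R :=
  expR (lam * t) * (- quad (symcov1 g L) x v + lam * lin L x v).

End Tensors.

(* Main.v *)
Require Import Defs.
From HB Require Import structures.
From mathcomp Require Import all_boot all_order all_algebra.
From mathcomp Require Import all_classical all_reals all_analysis.
Import Order.TTheory GRing.Theory Num.Theory.
Import numFieldNormedType.Exports.
Local Open Scope classical_set_scope.
Local Open Scope ring_scope.
From mathcomp Require Import perm fingroup ring lra.

Section Main.
Variable R : realType.
Variable n : nat.
Notation pt := 'rV[R]_n.

Lemma isdM (f g : R -> R) t df dg :
  is_derive t (1:R) f df -> is_derive t (1:R) g dg ->
  is_derive t (1:R) (fun s => f s * g s) (df * g t + f t * dg).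
Proof.
move=> Hf Hg; have := is_deriveM Hf Hg.
rewrite /GRing.scale /= => H.
rewrite (_ : df * g t + f t * dg = f t * dg + g t * df); last by rewrite addrC (mulrC df).
exact: H.
Qed.

Arguments isdM [f g t df dg].

Lemma isd_big (I : Type) (r : seq I) (P : pred I) (F : I -> R -> R) (dF : I -> R) t :
  (forall i, P i -> is_derive t (1:R) (F i) (dF i)) ->
  is_derive t (1:R) (fun s => \sum_(i <- r | P i) F i s) (\sum_(i <- r | P i) dF i).
Proof.
move=> HF; elim: r => [|a r IH].
  rewrite big_nil (_ : (fun s => _) = cst 0); first exact: is_derive_cst.
  by apply/funext => s; rewrite big_nil.
rewrite big_cons.
have -> : (fun s => \sum_(i <- a :: r | P i) F i s) =
   (fun s => if P a then F a s + \sum_(i <- r | P i) F i s else \sum_(i <- r | P i) F i s).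
  by apply/funext => s; rewrite big_cons.
case: (boolP (P a)) => Pa //.
have := is_deriveD (HF a Pa) IH. exact.
Qed.

Definition dn (f : pt -> R) (x : pt) :=
  exists2 f' : pt -> R, differentiable f' x & \forall y \near x, f y = f' y.

Lemma comp_isd (w : R -> pt) t (a : 'I_n) : derivable w t 1 ->
  is_derive t (1:R) (fun s => w s 0 a) (derive1 w t 0 a).
Proof.
move=> dw; have := dw => /derivable_mxP /(_ 0 a) da.
rewrite derive1E derive_mx // mxE.
exact: derivableP.
Qed.

Lemma chain (f : pt -> R) (q : R -> pt) t : derivable q t 1 -> dn f (q t) ->
  is_derive t (1:R) (fun s => f (q s))
    (\sum_(c < n) pd c f (q t) * derive1 q t 0 c).
Proof.
move=> dq [f' df' nf].
have dq' : differentiable q t by apply/derivable1_diffP.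
have dc : differentiable (f' \o q) t by apply: differentiable_comp.
have H : is_derive t (1:R) (f' \o q) (\sum_(c < n) pd c f' (q t) * derive1 q t 0 c).
  apply: DeriveDef; first exact: diff_derivable.
  rewrite deriveE // diff_comp //=.
  have -> : 'd q t 1 = derive1 q t by rewrite derive1E deriveE.
  rewrite {1}[derive1 q t]row_sum_delta linear_sum /=.
  apply: eq_bigr => c _; rewrite linearZ /= /pd -deriveE //.
  by rewrite mulrC.
have -> : \sum_(c < n) pd c f (q t) * derive1 q t 0 c =
          \sum_(c < n) pd c f' (q t) * derive1 q t 0 c.
  apply: eq_bigr => c _; congr (_ * _); rewrite /pd.
  exact: near_eq_derive.
apply: near_eq_is_derive H.
have cq : {for t, continuous q} by exact: differentiable_continuous.
have H1 : \forall s \near t, f (q s) = f' (q s) := cq _ nf.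
by apply: filterS H1 => s /= ->.
Qed.

Lemma dn_diff f x : differentiable f x -> dn f x.
Proof. by move=> df; exists f => //; near=> y. Unshelve. all: by end_near. Qed.

Lemma dn_ext f g x : (\forall y \near x, f y = g y) -> dn g x -> dn f x.
Proof.
move=> H [g' dg' ng]; exists g' => //.
by apply: filterS2 H ng => y -> ->.
Qed.

Lemma dn_cst (c : R) x : dn (fun _ => c) x.
Proof. apply: dn_diff; exact: differentiable_cst. Qed.

Lemma dn_add f g x : dn f x -> dn g x -> dn (fun y => f y + g y) x.
Proof.
move=> [f' df nf] [g' dg ng]; exists (fun y => f' y + g' y).
  exact: differentiableD.
by apply: filterS2 nf ng => y -> ->.
Qed.

Lemma dn_mul f g x : dn f x -> dn g x -> dn (fun y => f y * g y) x.
Proof.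
move=> [f' df nf] [g' dg ng]; exists (fun y => f' y * g' y).
  exact: differentiableM.
by apply: filterS2 nf ng => y -> ->.
Qed.

Lemma dn_opp f x : dn f x -> dn (fun y => - f y) x.
Proof.
move=> [f' df nf]; exists (fun y => - f' y).
  exact: differentiableN.
by apply: filterS nf => y ->.
Qed.

Lemma dn_inv f x : dn f x -> f x != 0 -> dn (fun y => (f y)^-1) x.
Proof.
move=> [f' df nf] fx; exists (fun y => (f' y)^-1).
  apply: differentiableV => //. by rewrite -(nbhs_singleton nf).
by apply: filterS nf => y ->.
Qed.

Lemma dn_sum (I : Type) (r : seq I) (P : pred I) (F : I -> pt -> R) x :
  (forall i, P i -> dn (F i) x) -> dn (fun y => \sum_(i <- r | P i) F i y) x.
Proof.
move=> HF; elim: r => [|a r IH].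
  apply: (@dn_ext _ (fun _ => 0)); first by near=> y; rewrite big_nil.
  exact: dn_cst.
apply: (@dn_ext _ (fun y => if P a then F a y + \sum_(i <- r | P i) F i y
                           else \sum_(i <- r | P i) F i y)).
  by near=> y; rewrite big_cons.
case: (boolP (P a)) => Pa //.
exact: dn_add (HF a Pa) IH.
Unshelve. all: by end_near. Qed.

Lemma dn_prod (I : Type) (r : seq I) (P : pred I) (F : I -> pt -> R) x :
  (forall i, P i -> dn (F i) x) -> dn (fun y => \prod_(i <- r | P i) F i y) x.
Proof.
move=> HF; elim: r => [|a r IH].
  apply: (@dn_ext _ (fun _ => 1)); first by near=> y; rewrite big_nil.
  exact: dn_cst.
apply: (@dn_ext _ (fun y => if P a then F a y * \prod_(i <- r | P i) F i y
                           else \prod_(i <- r | P i) F i y)).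
  by near=> y; rewrite big_cons.
case: (boolP (P a)) => Pa //.
exact: dn_mul (HF a Pa) IH.
Unshelve. all: by end_near. Qed.

Lemma dn_det k (F : 'I_k -> 'I_k -> pt -> R) x :
  (forall i j, dn (F i j) x) -> dn (fun y => \det (\matrix_(i, j) F i j y)) x.
Proof.
move=> HF.
apply: (@dn_ext _ (fun y => \sum_(s : 'S_k) (-1) ^+ s * \prod_i F i (s i) y)).
  near=> y; rewrite /determinant; apply: eq_bigr => s _; congr (_ * _).
  by apply: eq_bigr => i _; rewrite mxE.
apply: dn_sum => s _; apply: dn_mul; first exact: dn_cst.
by apply: dn_prod => i _.
Unshelve. all: by end_near. Qed.


Lemma dn_smooth D f x : smooth_on D f -> D x -> dn f x.
Proof. by move=> Hs Dx; apply: dn_diff; exact: (Hs [::] x Dx). Qed.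

Lemma dn_pd D f x c : smooth_on D f -> D x -> dn (pd c f) x.
Proof. by move=> Hs Dx; apply: dn_diff; exact: (Hs [:: c] x Dx). Qed.

Lemma dn_ginv D (g : tens2 R n) x a b : open D -> is_metric D g -> D x ->
  dn (ginv g a b) x.
Proof.
move=> oD [gs [gu gsm]] Dx.
have nD : \forall y \near x, D y by apply: open_nbhs_nbhs.
apply: (@dn_ext _ (fun y => (\det (\matrix_(i, j) g i j y))^-1 *
   ((-1) ^+ (b + a) * \det (\matrix_(i, j) g (lift b i) (lift a j) y)))).
  apply: filterS nD => y Dy.
  rewrite /ginv /invmx (gu y Dy) !mxE /cofactor; congr (_^-1 * (_ * \det _)).
  by apply/matrixP => i j; rewrite !mxE.
apply: dn_mul; last apply: dn_mul.
- apply: dn_inv; first by apply: dn_det => i j; exact: (dn_smooth _ _ _ (gsm i j) Dx).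
  have := gu x Dx; rewrite unitmxE unitfE.
  by congr (_ != _); congr (\det _); apply/matrixP => i j; rewrite !mxE.
- exact: dn_cst.
- by apply: dn_det => i j; exact: (dn_smooth _ _ _ (gsm _ _) Dx).
Qed.

Lemma dn_Gam D (g : tens2 R n) x a b c : open D -> is_metric D g -> D x ->
  dn (Gam g a b c) x.
Proof.
move=> oD gm Dx; have [_ [_ gsm]] := gm.
apply: dn_mul; first exact: dn_cst.
apply: dn_sum => d _; apply: dn_mul; first exact: (dn_ginv _ _ _ _ _ oD gm Dx).
apply: dn_add; first apply: dn_add; try apply: dn_opp; exact: (dn_pd _ _ _ _ (gsm _ _) Dx).
Qed.

Lemma dn_cov1 D (g : tens2 R n) L x a b : open D -> is_metric D g -> D x ->
  (forall a, smooth_on D (L a)) -> dn (cov1 g L a b) x.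
Proof.
move=> oD gm Dx Ls; apply: dn_add; first exact: (dn_pd _ _ _ _ (Ls _) Dx).
apply: dn_opp; apply: dn_sum => d _; apply: dn_mul; first exact: (dn_Gam _ _ _ _ _ _ oD gm Dx).
exact: (dn_smooth _ _ _ (Ls _) Dx).
Qed.

Lemma dn_symcov1 D (g : tens2 R n) L x a b : open D -> is_metric D g -> D x ->
  (forall a, smooth_on D (L a)) -> dn (symcov1 g L a b) x.
Proof.
move=> oD gm Dx Ls; apply: dn_mul; first exact: dn_cst.
by apply: dn_add; apply: (dn_cov1 _ _ _ _ _ _ oD gm Dx Ls).
Qed.


Lemma quad_sym2 (T : tens2 R n) x (v : pt) : quad (sym2 T) x v = quad T x v.
Proof.
rewrite /quad /sym2.
have E : \sum_(a < n) \sum_(b < n) T b a x * v 0 a * v 0 b =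
         \sum_(a < n) \sum_(b < n) T a b x * v 0 a * v 0 b.
  rewrite exchange_big; apply: eq_bigr => a _; apply: eq_bigr => b _; ring.
transitivity (2^-1 * (\sum_(a < n) \sum_(b < n) T a b x * v 0 a * v 0 b +
                      \sum_(a < n) \sum_(b < n) T b a x * v 0 a * v 0 b)).
  rewrite -big_split mulr_sumr; apply: eq_bigr => a _.
  rewrite -big_split mulr_sumr; apply: eq_bigr => b _ /=; ring.
by rewrite E; field.
Qed.


Lemma lin_alg (g : tens2 R n) (L : covfield R n) (x v w : pt) :
  (forall a, w 0 a + \sum_(b < n) \sum_(c < n) Gam g a b c x * v 0 b * v 0 c = 0) ->
  \sum_(a < n) ((\sum_(b < n) pd b (L a) x * v 0 b) * v 0 a + L a x * w 0 a)
  = quad (symcov1 g L) x v.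
Proof.
move=> hw.
have hw' a : w 0 a = - \sum_(b < n) \sum_(c < n) Gam g a b c x * v 0 b * v 0 c.
  by apply/eqP; rewrite -subr_eq0 opprK hw.
rewrite /symcov1 quad_sym2 /quad /cov1.
have -> : \sum_(a < n) \sum_(b < n)
    (pd b (L a) x - \sum_(d < n) Gam g d a b x * L d x) * v 0 a * v 0 b =
  \sum_(a < n) \sum_(b < n) pd b (L a) x * v 0 a * v 0 b +
  \sum_(a < n) \sum_(b < n) \sum_(d < n) - (Gam g d a b x * L d x * v 0 a * v 0 b).
  rewrite -big_split; apply: eq_bigr => a _; rewrite -big_split; apply: eq_bigr => b _ /=.
  rewrite !mulrBl !mulr_suml -sumrN; congr (_ + _); apply: eq_bigr => d _; ring.
rewrite big_split /=; congr (_ + _).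
  apply: eq_bigr => a _; rewrite mulr_suml; apply: eq_bigr => b _; ring.
under eq_bigr => a _ do rewrite hw' mulrN mulr_sumr -sumrN.
under eq_bigr => a _ do under eq_bigr => i _ do rewrite mulr_sumr -sumrN.
rewrite exchange_big; apply: eq_bigr => a _; rewrite exchange_big.
apply: eq_bigr => b _; apply: eq_bigr => d _; ring.
Qed.

Lemma quad_alg (g : tens2 R n) (K : tens2 R n) (x v w : pt) :
  (forall a, w 0 a + \sum_(b < n) \sum_(c < n) Gam g a b c x * v 0 b * v 0 c = 0) ->
  \sum_(a < n) \sum_(b < n)
     (((\sum_(c < n) pd c (K a b) x * v 0 c) * v 0 a + K a b x * w 0 a) * v 0 b
      + K a b x * v 0 a * w 0 b)
  = \sum_(a < n) \sum_(b < n) \sum_(c < n) cov2 g K a b c x * v 0 a * v 0 b * v 0 c.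
Proof.
move=> hw.
have hw' a : w 0 a = - \sum_(b < n) \sum_(c < n) Gam g a b c x * v 0 b * v 0 c.
  by apply/eqP; rewrite -subr_eq0 opprK hw.
have -> : \sum_(a < n) \sum_(b < n)
     (((\sum_(c < n) pd c (K a b) x * v 0 c) * v 0 a + K a b x * w 0 a) * v 0 b
      + K a b x * v 0 a * w 0 b) =
   \sum_(a < n) \sum_(b < n) \sum_(c < n) pd c (K a b) x * v 0 a * v 0 b * v 0 c
 + \sum_(a < n) \sum_(b < n) K a b x * w 0 a * v 0 b
 + \sum_(a < n) \sum_(b < n) K a b x * v 0 a * w 0 b.
  rewrite -!big_split; apply: eq_bigr => a _; rewrite -!big_split; apply: eq_bigr => b _ /=.
  rewrite !mulrDl !mulr_suml; congr (_ + _ + _); apply: eq_bigr => c _; ring.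
have -> : \sum_(a < n) \sum_(b < n) \sum_(c < n) cov2 g K a b c x * v 0 a * v 0 b * v 0 c =
   \sum_(a < n) \sum_(b < n) \sum_(c < n) pd c (K a b) x * v 0 a * v 0 b * v 0 c
 + \sum_(a < n) \sum_(b < n) \sum_(c < n) \sum_(d < n)
      - (Gam g d a c x * K d b x * v 0 a * v 0 b * v 0 c)
 + \sum_(a < n) \sum_(b < n) \sum_(c < n) \sum_(d < n)
      - (Gam g d b c x * K a d x * v 0 a * v 0 b * v 0 c).
  rewrite -!big_split; apply: eq_bigr => a _; rewrite -!big_split; apply: eq_bigr => b _ /=.
  rewrite -!big_split; apply: eq_bigr => c _ /=.
  rewrite /cov2 -addrA -big_split /= !mulrBl !mulr_suml -sumrN; congr (_ + _).
  apply: eq_bigr => d _; ring.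
congr (_ + _ + _).
- under eq_bigr => a _ do under eq_bigr => b _ do
    rewrite hw' mulrN mulNr mulr_sumr mulr_suml -sumrN.
  under eq_bigr => a _ do under eq_bigr => b _ do under eq_bigr => i _ do
    rewrite mulr_sumr mulr_suml -sumrN.
  rewrite exchange_big.
  under eq_bigr => b _ do rewrite exchange_big.
  rewrite exchange_big.
  apply: eq_bigr => a _; apply: eq_bigr => b _; rewrite exchange_big.
  apply: eq_bigr => c _; apply: eq_bigr => d _; ring.
- under eq_bigr => a _ do under eq_bigr => b _ do
    rewrite hw' mulrN mulr_sumr -sumrN.
  under eq_bigr => a _ do under eq_bigr => b _ do under eq_bigr => i _ do
    rewrite mulr_sumr -sumrN.
  apply: eq_bigr => a _; rewrite exchange_big.
  apply: eq_bigr => b _; rewrite exchange_big.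
  apply: eq_bigr => c _; apply: eq_bigr => d _; ring.
Qed.

Lemma sym3_contr (T : 'I_n -> 'I_n -> 'I_n -> pt -> R) (x v : pt) :
  \sum_(a < n) \sum_(b < n) \sum_(c < n) sym3 T a b c x * v 0 a * v 0 b * v 0 c =
  \sum_(a < n) \sum_(b < n) \sum_(c < n) T a b c x * v 0 a * v 0 b * v 0 c.
Proof.
set Phi := fun F : 'I_n -> 'I_n -> 'I_n -> R =>
  \sum_(a < n) \sum_(b < n) \sum_(c < n) F a b c * v 0 a * v 0 b * v 0 c.
have E1 : Phi (fun a b c => T a c b x) = Phi (fun a b c => T a b c x).
  rewrite /Phi; apply: eq_bigr => a _; rewrite exchange_big.
  apply: eq_bigr => b _; apply: eq_bigr => c _; ring.
have E2 : Phi (fun a b c => T b a c x) = Phi (fun a b c => T a b c x).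
  rewrite /Phi exchange_big.
  apply: eq_bigr => a _; apply: eq_bigr => b _; apply: eq_bigr => c _; ring.
have E3 : Phi (fun a b c => T b c a x) = Phi (fun a b c => T a b c x).
  rewrite /Phi exchange_big.
  apply: eq_bigr => a _; rewrite exchange_big.
  apply: eq_bigr => b _; apply: eq_bigr => c _; ring.
have E4 : Phi (fun a b c => T c a b x) = Phi (fun a b c => T a b c x).
  rewrite /Phi.
  under eq_bigr => a _ do rewrite exchange_big.
  rewrite exchange_big.
  apply: eq_bigr => a _; apply: eq_bigr => b _; apply: eq_bigr => c _; ring.
have E5 : Phi (fun a b c => T c b a x) = Phi (fun a b c => T a b c x).
  rewrite /Phi.
  under eq_bigr => a _ do rewrite exchange_big.
  rewrite exchange_big.
  apply: eq_bigr => a _; rewrite exchange_big.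
  apply: eq_bigr => b _; apply: eq_bigr => c _; ring.
transitivity (6^-1 * (Phi (fun a b c => T a b c x) + Phi (fun a b c => T a c b x)
  + Phi (fun a b c => T b a c x) + Phi (fun a b c => T b c a x)
  + Phi (fun a b c => T c a b x) + Phi (fun a b c => T c b a x))).
  rewrite /Phi -!big_split mulr_sumr; apply: eq_bigr => a _ /=.
  rewrite -!big_split mulr_sumr; apply: eq_bigr => b _ /=.
  rewrite -!big_split mulr_sumr; apply: eq_bigr => c _ /=.
  rewrite /sym3; ring.
by rewrite E1 E2 E3 E4 E5 /Phi; field.
Qed.

Lemma ug_contr (u : covfield R n) (g : tens2 R n) (x v : pt) :
  \sum_(a < n) \sum_(b < n) \sum_(c < n) (u a x * g b c x) * v 0 a * v 0 b * v 0 c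
  = lin u x v * quad g x v.
Proof.
rewrite /lin /quad mulr_suml; apply: eq_bigr => a _.
rewrite mulr_sumr; apply: eq_bigr => b _.
rewrite mulr_sumr; apply: eq_bigr => c _; ring.
Qed.

Lemma ckt_contr D (g : tens2 R n) (K : tens2 R n) u (x v : pt) :
  is_CKT D g K u -> D x ->
  \sum_(a < n) \sum_(b < n) \sum_(c < n) cov2 g K a b c x * v 0 a * v 0 b * v 0 c
  = lin u x v * quad g x v.
Proof.
move=> [_ Hc] Dx.
rewrite -sym3_contr -ug_contr -(sym3_contr (fun a b c y => u a y * g b c y)).
apply: eq_bigr => a _; apply: eq_bigr => b _; apply: eq_bigr => c _.
by rewrite (Hc a b c x Dx).
Qed.


Lemma isdX (k : nat) (t : R) : is_derive t (1:R) (fun s => s ^+ k) (k%:R * t ^+ k.-1).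
Proof.
have := @is_deriveX R R id k t 1 1 (is_derive_id _ _).
have -> : (fun s : R => s ^+ k) = (@id R) ^+ k by apply/funext => s; rewrite exprfctE.
by move=> H; apply: is_derive_eq H _; exact: mulr1.
Qed.

Lemma isdN (f : R -> R) t df : is_derive t (1:R) f df ->
  is_derive t (1:R) (fun s => - f s) (- df).
Proof. move=> H; exact: is_deriveN. Qed.

Lemma isdD (f g : R -> R) t df dg : is_derive t (1:R) f df -> is_derive t (1:R) g dg ->
  is_derive t (1:R) (fun s => f s + g s) (df + dg).
Proof. move=> H1 H2; exact: is_deriveD. Qed.

Lemma isdC (c t : R) : is_derive t (1:R) (fun _ => c) 0.
Proof. exact: is_derive_cst. Qed.

Lemma isd_exp (lam t : R) :
  is_derive t (1:R) (fun s => expR (lam * s)) (lam * expR (lam * t)).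
Proof.
have H1 : is_derive t (1:R) (fun s => lam * s) lam.
  have := isdM (isdC lam t) (@is_derive_id _ _ t 1).
  by rewrite mul0r add0r /= mulr1.
have := is_derive1_comp (is_derive_expR (lam * t)) H1.
by rewrite mulrC.
Qed.

Lemma isd_big_nat (m N : nat) (F : nat -> R -> R) (dF : nat -> R) (t : R) :
  (forall k, (m <= k < N)%N -> is_derive t (1:R) (F k) (dF k)) ->
  is_derive t (1:R) (fun s => \sum_(m <= k < N) F k s) (\sum_(m <= k < N) dF k).
Proof.
move=> H; rewrite big_nat_cond.
have -> : (fun s => \sum_(m <= k < N) F k s) =
          (fun s => \sum_(m <= k < N | (m <= k < N)%N && true) F k s).
  by apply/funext => s; rewrite big_nat_cond.
by apply: isd_big => k /andP[Hk _]; exact: H.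
Qed.

Lemma quad_lin (c : nat -> R) (T : nat -> tens2 R n) (C : tens2 R n) (m N : nat) (x v : pt) :
  quad (fun a b y => - (\sum_(m <= k < N) c k * T k a b y) + C a b y) x v =
  - (\sum_(m <= k < N) c k * quad (T k) x v) + quad C x v.
Proof.
transitivity (\sum_(m <= k < N) \sum_(a < n) \sum_(b < n) - (c k * T k a b x * v 0 a * v 0 b)
              + quad C x v).
  symmetry; rewrite /quad exchange_big /=.
  under eq_bigr => a _ do rewrite exchange_big.
  rewrite -big_split; apply: eq_bigr => a _; rewrite -big_split; apply: eq_bigr => b _ /=.
  rewrite !mulrDl !mulNr !mulr_suml -sumrN; congr (_ + _).
congr (_ + _); rewrite -sumrN; apply: eq_bigr => k _.
rewrite /quad mulr_sumr -sumrN; apply: eq_bigr => a _.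
rewrite mulr_sumr -sumrN; apply: eq_bigr => b _; ring.
Qed.

Definition geo_at (g : tens2 R n) E0 (q : R -> pt) t :=
  [/\ derivable q t 1, derivable (derive1 q) t 1,
      (forall a, derive1 (derive1 q) t 0 a +
         \sum_(b < n) \sum_(c < n) Gam g a b c (q t) * derive1 q t 0 b * derive1 q t 0 c = 0)
      & quad g (q t) (derive1 q t) = 2 * E0].

Lemma lin_isd g E0 q t (L : covfield R n) : geo_at g E0 q t ->
  (forall a, dn (L a) (q t)) ->
  is_derive t (1:R) (fun s => lin L (q s) (derive1 q s)) (quad (symcov1 g L) (q t) (derive1 q t)).
Proof.
move=> [dq dv hw hq] dL.
rewrite -(lin_alg g L (q t) (derive1 q t) _ hw) /lin.
apply: isd_big => a _; apply: isdM; first exact: chain.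
exact: comp_isd.
Qed.

Lemma quad_isd g E0 q t D (K : tens2 R n) u : geo_at g E0 q t -> D (q t) ->
  (forall a b, dn (K a b) (q t)) -> is_CKT D g K u ->
  is_derive t (1:R) (fun s => quad K (q s) (derive1 q s)) (2 * E0 * lin u (q t) (derive1 q t)).
Proof.
move=> [dq dv hw hq] Dq dK ck.
rewrite mulrC -hq -(ckt_contr _ _ _ _ _ (derive1 q t) ck Dq) -(quad_alg g K (q t) (derive1 q t) _ hw) /quad.
apply: isd_big => a _; apply: isd_big => b _.
apply: isdM; last exact: comp_isd.
apply: isdM; last exact: comp_isd.
exact: chain.
Qed.

End Main.
Arguments isdM {R f g t df dg}.
Arguments isdD {R f g t df dg}.
Arguments isdN {R f t df}.
Arguments isdC {R}.
Arguments isdX {R}.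
Arguments isd_exp {R}.
Arguments isd_big {R I r P F dF t}.
Arguments lin_isd {R n g E0 q t L}.
Arguments quad_isd {R n g E0 q t D K u}.
Arguments dn_symcov1 {R n D g L x} a b.
Arguments dn_smooth {R n D f x}.
Arguments geo_at {R n}.
Arguments dn {R n}.
Arguments isd_big_nat {R m N F dF t}.
Arguments chain {R n f q t}.

Lemma int3 (R : realType) (n : nat) (D : set 'rV[R]_n) (g : tens2 R n) (E0 : R) :
  open D -> is_metric D g ->
  (forall (lam : R) (L Y : covfield R n),
     lam != 0 ->
     (forall a, smooth_on D (L a)) ->
     is_CKT D g (symcov1 g L) Y ->
     (forall a x, D x -> L a x = 2 * E0 / lam ^+ 2 * Y a x) ->
     first_integral D g E0 (Iexp g lam L)).
Proof.
move=> oD gm lam L Y lam0 Ls ck HL T q oT cg t Tt.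
have [Dq dq dv hw hq] := cg t Tt.
have geo : geo_at g E0 q t by split.
have dK a b : dn (symcov1 g L a b) (q t) := dn_symcov1 a b oD gm Dq Ls.
have dL a : dn (L a) (q t) := dn_smooth (Ls a) Dq.
have HQ := quad_isd geo Dq dK ck.
have HL' := lin_isd geo dL.
have H := isdM (isd_exp lam t) (isdD (isdN HQ) (isdM (isdC lam t) HL')).
rewrite /Iexp; apply: (is_derive_eq H).
have hLY : lin L (q t) (derive1 q t) = 2 * E0 / lam ^+ 2 * lin Y (q t) (derive1 q t).
  rewrite /lin mulr_sumr; apply: eq_bigr => a _; rewrite (HL a _ Dq); ring.
by rewrite hLY; field.
Qed.

Lemma int2 (R : realType) (n : nat) (D : set 'rV[R]_n) (g : tens2 R n) (E0 : R) :
  open D -> is_metric D g ->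
  (forall (ell : nat) (L Y : nat -> covfield R n),
     (forall k a, (k <= ell)%N -> smooth_on D (L (2 * k)%N a)) ->
     (forall k, (k <= ell)%N ->
        is_CKT D g (symcov1 g (L (2 * k)%N)) (Y (2 * k)%N)) ->
     (forall a x, D x -> E0 * Y (2 * ell)%N a x = 0) ->
     (forall k, (k < ell)%N -> forall a x, D x ->
        E0 * Y (2 * k)%N a x = ((k + 1) * (2 * k + 1))%:R * L (2 * k + 2)%N a x) ->
     first_integral D g E0 (I2 g ell L)).
Proof.
move=> oD gm ell L Y Ls ck hE hEk T q oT cg t Tt.
have [Dq dq dv hw hq] := cg t Tt.
have geo : geo_at g E0 q t by split.
pose A k := lin (L (2 * k)%N) (q t) (derive1 q t).
pose B k := lin (Y (2 * k)%N) (q t) (derive1 q t).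
have HD : forall k, (0 <= k < ell.+1)%N -> is_derive t (1:R)
   (fun s => - (s ^+ (2 * k + 1) / (2 * k + 1)%:R) *
       quad (symcov1 g (L (2 * k)%N)) (q s) (derive1 q s)
     + s ^+ (2 * k) * lin (L (2 * k)%N) (q s) (derive1 q s))
   (- (2 * t ^+ (2 * k + 1) / (2 * k + 1)%:R) * (E0 * B k)
     + (2 * k)%:R * t ^+ (2 * k).-1 * A k).
  move=> k /andP[_ Hk]; rewrite ltnS in Hk.
  have Lk a : smooth_on D (L (2 * k)%N a) := Ls k a Hk.
  have dK a b : dn (symcov1 g (L (2 * k)%N) a b) (q t) := dn_symcov1 a b oD gm Dq Lk.
  have dL a : dn (L (2 * k)%N a) (q t) := dn_smooth (Lk a) Dq.
  apply: is_derive_eq.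
    exact: (isdD (isdM (isdN (isdM (isdX _ t) (isdC _ t))) (quad_isd geo Dq dK (ck k Hk)))
                 (isdM (isdX _ t) (lin_isd geo dL))).
  rewrite /A /B addn1 /=.
  field; rewrite gt_eqF //; have := ler0n R k; lra.
have hBe : E0 * B ell = 0.
  rewrite /B /lin mulr_sumr big1 // => a _; by rewrite mulrA (hE a _ Dq) mul0r.
have hBk k : (k < ell)%N -> E0 * B k = ((k + 1) * (2 * k + 1))%:R * A k.+1.
  move=> Hk; rewrite /A /B /lin !mulr_sumr; apply: eq_bigr => a _.
  by rewrite mulrA (hEk k Hk a _ Dq) mulnSr mulrA.
have H := isd_big_nat HD; rewrite /I2; apply: (is_derive_eq H).
rewrite big_split /= big_nat_recr //= hBe mulr0 addr0.
rewrite big_nat_recl // muln0 mul0r !mul0r add0r -big_split.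
rewrite big_nat_cond; apply: big1 => k /andP[/andP[_ Hk] _].
rewrite (hBk k Hk).
have -> : ((2 * k.+1).-1 = 2 * k + 1)%N by rewrite mulnSr addn2 addn1.
rewrite /= -[k.+1]addn1 (natrM R 2 (k + 1)) (natrM R (k + 1) (2 * k + 1)).
field; rewrite gt_eqF //; have := ler0n R k; lra.
Qed.

Lemma int1 (R : realType) (n : nat) (D : set 'rV[R]_n) (g : tens2 R n) (E0 : R) :
  open D -> is_metric D g ->
  (forall (ell : nat) (C0 : tens2 R n) (X0 : covfield R n)
          (L Y : nat -> covfield R n) (G : sfield R n),
     (forall a b, smooth_on D (C0 a b)) ->
     (forall k a, (1 <= k <= ell)%N -> smooth_on D (L (2 * k - 1)%N a)) ->
     smooth_on D G ->
     is_CKT D g C0 X0 ->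
     (forall k, (1 <= k <= ell)%N ->
        is_CKT D g (symcov1 g (L (2 * k - 1)%N)) (Y (2 * k - 1)%N)) ->
     ((0 < ell)%N -> forall a x, D x -> E0 * Y (2 * ell - 1)%N a x = 0) ->
     (forall k, (1 <= k < ell)%N -> forall a x, D x ->
        E0 * Y (2 * k - 1)%N a x = (k * (2 * k + 1))%:R * L (2 * k + 1)%N a x) ->
     (forall a x, D x ->
        pd a G x = - (2 * E0 * X0 a x) - (if (0 < ell)%N then L 1%N a x else 0)) ->
     first_integral D g E0 (I1 g ell C0 L G)).
Proof.
move=> oD gm ell C0 X0 L Y G Cs Ls Gs ckC ck hE hEk hG T q oT cg t Tt.
have [Dq dq dv hw hq] := cg t Tt.
have geo : geo_at g E0 q t by split.
pose Q k := quad (symcov1 g (L (2 * k - 1)%N)) (q t) (derive1 q t).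
pose A k := lin (L (2 * k - 1)%N) (q t) (derive1 q t).
pose B k := lin (Y (2 * k - 1)%N) (q t) (derive1 q t).
have HQ : forall k, (1 <= k < ell.+1)%N -> is_derive t (1:R)
   (fun s => s ^+ (2 * k) / (2 * k)%:R *
       quad (symcov1 g (L (2 * k - 1)%N)) (q s) (derive1 q s))
   (t ^+ (2 * k - 1) * Q k + t ^+ (2 * k) / (2 * k)%:R * (2 * (E0 * B k))).
  move=> k /andP[k1 kl]; rewrite ltnS in kl.
  have kk : (1 <= k <= ell)%N by rewrite k1 kl.
  have Lk a : smooth_on D (L (2 * k - 1)%N a) := Ls k a kk.
  have dK a b : dn (symcov1 g (L (2 * k - 1)%N) a b) (q t) := dn_symcov1 a b oD gm Dq Lk.
  apply: is_derive_eq.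
    exact: (isdM (isdM (isdX _ t) (isdC _ t)) (quad_isd geo Dq dK (ck k kk))).
  rewrite /Q /B subn1.
  by field; rewrite pnatr_eq0 -lt0n.
have HL : forall k, (1 <= k < ell.+1)%N -> is_derive t (1:R)
   (fun s => s ^+ (2 * k - 1) * lin (L (2 * k - 1)%N) (q s) (derive1 q s))
   ((2 * k - 1)%:R * t ^+ (2 * k - 1).-1 * A k + t ^+ (2 * k - 1) * Q k).
  move=> k /andP[k1 kl]; rewrite ltnS in kl.
  have kk : (1 <= k <= ell)%N by rewrite k1 kl.
  have dL a : dn (L (2 * k - 1)%N a) (q t) := dn_smooth (Ls k a kk) Dq.
  exact: (isdM (isdX _ t) (lin_isd geo dL)).
have HC := quad_isd geo Dq (fun a b => dn_smooth (Cs a b) Dq) ckC.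
have HG := chain dq (dn_smooth Gs Dq).
have H := isdD (isdD (isdD (isdN (isd_big_nat HQ)) HC) (isd_big_nat HL)) HG.
have -> : (fun s => I1 g ell C0 L G s (q s) (derive1 q s)) =
  (fun s => - (\sum_(1 <= k < ell.+1) s ^+ (2 * k) / (2 * k)%:R *
                 quad (symcov1 g (L (2 * k - 1)%N)) (q s) (derive1 q s))
            + quad C0 (q s) (derive1 q s)
            + \sum_(1 <= k < ell.+1) s ^+ (2 * k - 1) * lin (L (2 * k - 1)%N) (q s) (derive1 q s)
            + G (q s)).
  by apply/funext => s; rewrite /I1 quad_lin.
apply: (is_derive_eq H).
have hGv : \sum_(c < n) pd c G (q t) * derive1 q t 0 c + 2 * E0 * lin X0 (q t) (derive1 q t)
           + (if (0 < ell)%N then A 1%N else 0) = 0.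
  have e21 : (2 * 1 - 1 = 1)%N by [].
  rewrite /A e21 /lin mulr_sumr; case: ifP => Hl.
    rewrite -!big_split /= big1 // => c _ /=; rewrite (hG c _ Dq) Hl /=; ring.
  rewrite addr0 -!big_split /= big1 // => c _ /=; rewrite (hG c _ Dq) Hl /=; ring.
pose e k := (2 * k - 1)%:R * t ^+ (2 * k - 1).-1 * A k.
pose c k := t ^+ (2 * k) / (2 * k)%:R * (2 * (E0 * B k)).
have HS : \sum_(1 <= k < ell.+1) (e k - c k) = if (0 < ell)%N then A 1%N else 0.
  case Hell : ell => [|m]; first by rewrite big_geq.
  rewrite Hell in hE hEk.
  rewrite sumrB [X in X - _]big_nat_recl // [X in _ - X]big_nat_recr //=.
  have c0 : c m.+1 = 0.
    rewrite /c /B /lin mulr_sumr big1 ?mulr0 ?mul0r // => a _.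
    by rewrite mulrA (hE isT a _ Dq) mul0r.
  have e1 : e 1%N = A 1%N by rewrite /e /= expr0 !mul1r.
  have Eq : \sum_(1 <= k < m.+1) e k.+1 = \sum_(1 <= k < m.+1) c k.
    rewrite big_nat_cond [RHS]big_nat_cond; apply: eq_bigr => k /andP[/andP[k1 km] _].
    have hB : E0 * B k = (k * (2 * k + 1))%:R * A k.+1.
      rewrite /A /B /lin !mulr_sumr; apply: eq_bigr => a _.
      have -> : (2 * k.+1 - 1 = 2 * k + 1)%N by rewrite mulnSr addn2 subn1 addn1.
      by rewrite mulrA (hEk k (introT andP (conj k1 km)) a _ Dq) mulrA.
    rewrite /e /c hB.
    have -> : (2 * k.+1 - 1 = 2 * k + 1)%N by rewrite mulnSr addn2 subn1 addn1.
    rewrite addn1 /= (natrM R k (2 * k).+1) (natrM R 2 k).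
    field; rewrite pnatr_eq0 -lt0n //.
  by rewrite c0 e1 Eq addr0 addrK.
have E : \sum_(1 <= k < ell.+1)
     ((2 * k - 1)%:R * t ^+ (2 * k - 1).-1 * A k + t ^+ (2 * k - 1) * Q k) -
   \sum_(1 <= k < ell.+1)
     (t ^+ (2 * k - 1) * Q k + t ^+ (2 * k) / (2 * k)%:R * (2 * (E0 * B k)))
   = if (0 < ell)%N then A 1%N else 0.
  by rewrite -HS -sumrB; apply: eq_bigr => k _; rewrite /e /c; ring.
move/eqP: E; rewrite subr_eq => /eqP ->.
rewrite -[RHS]hGv; ring.
Qed.

Theorem theorem2 (R : realType) (n : nat) (D : set 'rV[R]_n)
    (g : tens2 R n) (E0 : R) :
  open D -> is_metric D g ->
  [/\
  (* Integral 1 *)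
  (forall (ell : nat) (C0 : tens2 R n) (X0 : covfield R n)
          (L Y : nat -> covfield R n) (G : sfield R n),
     (forall a b, smooth_on D (C0 a b)) ->
     (forall k a, (1 <= k <= ell)%N -> smooth_on D (L (2 * k - 1)%N a)) ->
     smooth_on D G ->
     is_CKT D g C0 X0 ->
     (forall k, (1 <= k <= ell)%N ->
        is_CKT D g (symcov1 g (L (2 * k - 1)%N)) (Y (2 * k - 1)%N)) ->
     ((0 < ell)%N -> forall a x, D x -> E0 * Y (2 * ell - 1)%N a x = 0) ->
     (forall k, (1 <= k < ell)%N -> forall a x, D x ->
        E0 * Y (2 * k - 1)%N a x = (k * (2 * k + 1))%:R * L (2 * k + 1)%N a x) ->
     (forall a x, D x ->
        pd a G x = - (2 * E0 * X0 a x) - (if (0 < ell)%N then L 1%N a x else 0)) ->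
     first_integral D g E0 (I1 g ell C0 L G)),
  (* Integral 2 *)
  (forall (ell : nat) (L Y : nat -> covfield R n),
     (forall k a, (k <= ell)%N -> smooth_on D (L (2 * k)%N a)) ->
     (forall k, (k <= ell)%N ->
        is_CKT D g (symcov1 g (L (2 * k)%N)) (Y (2 * k)%N)) ->
     (forall a x, D x -> E0 * Y (2 * ell)%N a x = 0) ->
     (forall k, (k < ell)%N -> forall a x, D x ->
        E0 * Y (2 * k)%N a x = ((k + 1) * (2 * k + 1))%:R * L (2 * k + 2)%N a x) ->
     first_integral D g E0 (I2 g ell L))
  &
  (* Integral 3 *)
  (forall (lam : R) (L Y : covfield R n),
     lam != 0 ->
     (forall a, smooth_on D (L a)) ->
     is_CKT D g (symcov1 g L) Y ->
     (forall a x, D x -> L a x = 2 * E0 / lam ^+ 2 * Y a x) ->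
     first_integral D g E0 (Iexp g lam L))].
Proof.
move=> oD gm; split.
- exact: (@int1 R n D g E0 oD gm).
- exact: (@int2 R n D g E0 oD gm).
- exact: (@int3 R n D g E0 oD gm).
Qed.
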